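(* Let $r\geq 2$, let $A$ be a nonnegative symmetric cubical $r$-matrix of order $n$, and let $p\geq r$ be real. Then $\eta^{(p)}(A)=\|A\|_p$.
   Context: A cubical $r$-matrix of order $n$ is a function $A$ on $[n]^r$ with values $a_{i_1,\ldots,i_r}$; it is symmetric if $a_{i_1,\ldots,i_r}$ is invariant under all permutations of the indices. For real symmetric $A$, $P_A(\mathbf{x})=\sum_{i_1,\ldots,i_r}a_{i_1,\ldots,i_r}x_{i_1}\cdots x_{i_r}$ for $\mathbf{x}\in\mathbb{R}^n$, and $\eta^{(p)}(A)=\max\{|P_A(\mathbf{x})|:\mathbf{x}\in\mathbb{R}^n,\ |\mathbf{x}|_p=1\}$. The linear form is $L_A(\mathbf{x}^{(1)},\ldots,\mathbf{x}^{(r)})=\sum a_{i_1,\ldots,i_r}\overline{x^{(1)}_{i_1}}\cdots\overline{x^{(r)}_{i_r}}$ for $\mathbf{x}^{(k)}\in\mathbb{C}^{n}$, and the spectral $p$-norm is $\|A\|_p=\max\{|L_A(\mathbf{x}^{(1)},\ldots,\mathbf{x}^{(r)})|:|\mathbf{x}^{(1)}|_p=\cdots=|\mathbf{x}^{(r)}|_p=1\}$, with $|\cdot|_p$ the $\ell^p$ norm. *)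

(* Defs.v *)
From HB Require Import structures.
From mathcomp Require Import all_boot all_order all_algebra all_fingroup.
From mathcomp Require Import all_classical all_reals all_analysis.
From mathcomp Require Import complex.
Set Implicit Arguments. Unset Strict Implicit. Unset Printing Implicit Defensive.
Import Order.TTheory GRing.Theory Num.Theory.
Local Open Scope ring_scope.
Local Open Scope classical_set_scope.

Definition cubmx (R : Type) (r n : nat) := r.-tuple 'I_n -> R.

Section Defs.
Variable R : realType.

Definition cub_symmetric (r n : nat) (A : cubmx R r n) : Prop :=
  forall (s : 'S_r) (i : r.-tuple 'I_n),
    A [tuple tnth i (s k) | k < r] = A i.

Definition cub_nonneg (r n : nat) (A : cubmx R r n) : Prop :=
  forall i, 0 <= A i.

Definition lpnormR (n : nat) (p : R) (x : 'I_n -> R) : R :=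
  (\sum_(j < n) `|x j| `^ p) `^ p^-1.

Definition cmod (z : complex R) : R := Num.sqrt (complex.Re z ^+ 2 + complex.Im z ^+ 2).

Definition lpnormC (n : nat) (p : R) (x : 'I_n -> complex R) : R :=
  (\sum_(j < n) cmod (x j) `^ p) `^ p^-1.

Definition PA (r n : nat) (A : cubmx R r n) (x : 'I_n -> R) : R :=
  \sum_(i : r.-tuple 'I_n) A i * \prod_(k < r) x (tnth i k).

(* eta^(p)(A) = max { |P_A(x)| : x in R^n, |x|_p = 1 } (taken as sup; the max is attained) *)
Definition eta_p (r n : nat) (p : R) (A : cubmx R r n) : R :=
  sup [set `|PA A x| | x in [set x : 'I_n -> R | lpnormR p x = 1]].

Definition LA (r n : nat) (A : cubmx R r n) (xs : 'I_r -> 'I_n -> complex R)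
  : complex R :=
  \sum_(i : r.-tuple 'I_n)
    (Complex (A i) 0) * \prod_(k < r) complex.conjc (xs k (tnth i k)).

Definition spec_pnorm (r n : nat) (p : R) (A : cubmx R r n) : R :=
  sup [set cmod (LA A xs) |
        xs in [set xs : 'I_r -> 'I_n -> complex R | forall k, lpnormC p (xs k) = 1]].

End Defs.

(* Main.v *)
Require Import Defs.
From HB Require Import structures.
From mathcomp Require Import all_boot all_order all_algebra all_fingroup.
From mathcomp Require Import all_classical all_reals all_analysis.
From mathcomp Require Import complex.
From mathcomp Require Import ring lra.
Import Order.TTheory GRing.Theory Num.Theory.
Local Open Scope ring_scope.
Local Open Scope classical_set_scope.

Section Alg.

Variable R : realFieldType.

Lemma amgm (r : nat) (b : 'I_r -> R) : (0 < r)%N -> (forall k, 0 <= b k) ->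
  \prod_k b k <= (\sum_k b k ^+ r) / r%:R.
Proof.
move=> r0 b0.
have := leif_AGM (A := predT) (E := fun k => b k ^+ r) _.
rewrite /= card_ord prodrXl => /(_ (fun k _ => exprn_ge0 r (b0 k))) [+ _].
rewrite ler_pXn2r // ?nnegrE ?prodr_ge0 // divr_ge0 // ?sumr_ge0 // => k _.
exact: exprn_ge0.
Qed.

Lemma sum_perm_eval (r : nat) (g : 'I_r -> R) (k : 'I_r) :
  r%:R * \sum_(s : 'S_r) g (s k) = r`!%:R * \sum_j g j.
Proof.
have E : forall k', \sum_(s : 'S_r) g (s k) = \sum_(s : 'S_r) g (s k').
  move=> k'; rewrite (reindex_inj (mulgI (tperm k k'))) /=.
  by apply: eq_bigr => s _; rewrite permM tpermL.
transitivity (\sum_(k' < r) \sum_(s : 'S_r) g (s k')).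
  by rewrite -(eq_bigr _ (fun k' _ => E k')) sumr_const card_ord mulr_natl.
rewrite exchange_big /=.
have H : forall s : 'S_r, \sum_(k' < r) g (s k') = \sum_j g j.
  by move=> s; rewrite [RHS](reindex_perm s).
under eq_bigr => s _ do rewrite H.
by rewrite sumr_const card_Sn mulr_natl.
Qed.


Lemma perm_bound (r : nat) (Y : 'I_r -> 'I_r -> R) (c : 'I_r -> R) :
  (0 < r)%N -> (forall k j, 0 <= Y k j) -> (forall j, 0 <= c j) ->
  (forall j, \sum_k Y k j ^+ r <= r%:R * c j ^+ r) ->
  \sum_(s : 'S_r) \prod_k Y k (s k) <= r`!%:R * \prod_j c j.
Proof.
move=> r0 Y0 c0 Hc.
have Pc : 0 <= r`!%:R * \prod_j c j by rewrite mulr_ge0 ?prodr_ge0.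
have [/existsP[j0 /eqP cj0]|/existsPn cpos] := boolP [exists j, c j == 0].
  have Yz : forall k, Y k j0 = 0.
    move=> k; have := Hc j0; rewrite cj0 expr0n gtn_eqF // mulr0 (bigD1 k) //=.
    move=> Hs; have : Y k j0 ^+ r <= 0.
      by apply: le_trans Hs; rewrite lerDl sumr_ge0 // => i _; apply: exprn_ge0.
    move=> H; apply/eqP; have := expf_eq0 (Y k j0) r; rewrite r0 /= => <-.
    by rewrite eq_le H exprn_ge0.
  rewrite big1 // => s _.
  by rewrite (bigD1 ((s^-1)%g j0)) //= permKV Yz mul0r.
have cp : forall j, 0 < c j by move=> j; rewrite lt_def cpos c0.
pose F k j := (Y k j / c j) ^+ r.
have step : forall s : 'S_r, \prod_k Y k (s k) <=
    \prod_j c j * ((\sum_k F k (s k)) / r%:R).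
  move=> s.
  have -> : \prod_k Y k (s k) = \prod_k c (s k) * \prod_k (Y k (s k) / c (s k)).
    rewrite -big_split /=; apply: eq_bigr => k _.
    by rewrite mulrC divfK // gt_eqF.
  have -> : \prod_k c (s k) = \prod_j c j by rewrite [RHS](reindex_perm s).
  apply: ler_wpM2l; first by rewrite prodr_ge0 // => j _; apply: ltW.
  apply: amgm => // k; by rewrite divr_ge0 // ltW.
apply: le_trans (ler_sum _ (fun s _ => step s)) _.
rewrite -mulr_sumr -mulr_suml exchange_big /=.
have E : forall k, \sum_(s : 'S_r) F k (s k) = r`!%:R / r%:R * \sum_j F k j.
  move=> k; apply: (mulfI (x := r%:R)); first by rewrite pnatr_eq0 -lt0n.
  by rewrite sum_perm_eval mulrA mulrCA divff ?mulr1 // pnatr_eq0 -lt0n.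
rewrite (eq_bigr _ (fun k _ => E k)) -mulr_sumr exchange_big /=.
have B : \sum_j \sum_k F k j <= r%:R * r%:R.
  have -> : (r%:R : R) * r%:R = \sum_(j < r) r%:R by rewrite sumr_const card_ord mulr_natl.
  apply: ler_sum => j _; rewrite /F.
  under eq_bigr => k _ do rewrite expr_div_n.
  by rewrite -mulr_suml ler_pdivrMr ?exprn_gt0 // Hc.
have rn0 : (r%:R : R) != 0 by rewrite pnatr_eq0 -lt0n.
apply: (le_trans (y := \prod_j c j * (r`!%:R / r%:R * (r%:R * r%:R) / r%:R))).
  apply: ler_wpM2l; first by rewrite prodr_ge0 // => j _; apply: ltW.
  apply: ler_wpM2r; first by rewrite invr_ge0 ler0n.
  by apply: ler_wpM2l B; rewrite divr_ge0 ?ler0n.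
have -> : (r`!%:R / r%:R * (r%:R * r%:R) / r%:R : R) = r`!%:R by field.
by rewrite mulrC.
Qed.

End Alg.

Section An.
Variable R : realType.


Lemma tangent (t u : R) : 0 < t <= 1 -> 0 <= u -> u `^ t <= 1 + t * (u - 1).
Proof.
move=> /andP[t0 t1] u0.
have [->|tn1] := eqVneq t 1; first by rewrite powRr1 // mul1r addrC subrK.
have t1' : t < 1 by rewrite lt_neqAle tn1.
have q0 : 0 < 1 - t by rewrite subr_gt0.
have := @conjugate_powR R (u `^ t) 1 t^-1 (1 - t)^-1 (powR_ge0 _ _) ler01.
rewrite !invr_gt0 t0 q0 => /(_ isT isT); rewrite !invrK addrC subrK => /(_ erefl).
rewrite mulr1 -powRrM mulfV ?gt_eqF // powRr1 // powR1.
lra.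
Qed.

Lemma powmean (r : nat) (p : R) (a : 'I_r -> R) : (0 < r)%N -> r%:R <= p ->
  (forall k, 0 <= a k) ->
  \sum_k a k ^+ r <= r%:R * (((\sum_k a k `^ p) / r%:R) `^ p^-1) ^+ r.
Proof.
move=> r0 rp a0.
have rR0 : (0 : R) < r%:R by rewrite ltr0n.
have p0 : 0 < p by apply: lt_le_trans rp.
set B := (\sum_k a k `^ p) / r%:R.
have B0 : 0 <= B.
  by apply: divr_ge0; [apply: sumr_ge0 => k _; apply: powR_ge0 | apply: ltW].
pose t := p^-1 * r%:R.
have t0 : 0 < t <= 1.
  by rewrite /t mulr_gt0 ?invr_gt0 //= mulrC ler_pdivrMr // mul1r.
have -> : (B `^ p^-1) ^+ r = B `^ t by rewrite -powR_mulrn ?powR_ge0 // -powRrM.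
have ar : forall k, a k ^+ r = (a k `^ p) `^ t.
  by move=> k; rewrite -powRrM /t mulrA mulfV ?gt_eqF // mul1r powR_mulrn.
have [Bz|Bpos] := eqVneq B 0.
  have az : forall k, a k = 0.
    move=> k; apply: (@powR_eq0_eq0 _ _ p); apply/eqP.
    move: Bz => /eqP; rewrite /B mulf_eq0 invr_eq0 pnatr_eq0 gtn_eqF // orbF.
    rewrite psumr_eq0 => [/allP /(_ k) |]; first by rewrite mem_index_enum => /(_ isT).
    by move=> i _; apply: powR_ge0.
  rewrite big1 ?mulr_ge0 ?powR_ge0 ?ler0n // => k _.
  by rewrite az expr0n gtn_eqF.
have Bp : 0 < B by rewrite lt_def Bpos B0.
apply: (le_trans (y := \sum_k B `^ t * (1 + t * (a k `^ p / B - 1)))).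
  apply: ler_sum => k _; rewrite ar.
  have BB : 0 <= a k `^ p / B by apply: divr_ge0; [apply: powR_ge0|apply: ltW].
  rewrite [X in X `^ t](_ : _ = B * (a k `^ p / B)); last first.
    by rewrite mulrC divfK // gt_eqF.
  rewrite powRM //; apply: ler_wpM2l; first exact: powR_ge0.
  exact: tangent.
rewrite -mulr_sumr mulrC ler_wpM2r ?powR_ge0 //.
rewrite big_split /= sumr_const card_ord -mulr_sumr sumrB -mulr_suml sumr_const card_ord.
have -> : \sum_k a k `^ p = r%:R * B by rewrite /B mulrC divfK // gt_eqF.
by rewrite mulfK ?gt_eqF // subrr mulr0 addr0.
Qed.



Lemma cmodE (z : complex R) : cmod z = Normc.normc z.
Proof. by case: z. Qed.

Lemma cmod_ge0 (z : complex R) : 0 <= cmod z.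
Proof. exact: sqrtr_ge0. Qed.

Lemma cmodM (x y : complex R) : cmod (x * y) = cmod x * cmod y.
Proof. by rewrite !cmodE Normc.normcM. Qed.

Lemma cmod_real (a : R) : cmod (Complex a 0) = `|a|.
Proof. by rewrite /cmod /= expr0n /= addr0 sqrtr_sqr. Qed.

Lemma cmod_conj (z : complex R) : cmod (conjc z) = cmod z.
Proof. by case: z => a b; rewrite /cmod /= sqrrN. Qed.

Lemma cmod_sum (I : finType) (F : I -> complex R) :
  cmod (\sum_i F i) <= \sum_i cmod (F i).
Proof.
elim/big_rec2: _ => [|i y1 y2 _ H].
  by rewrite cmod_real normr0.
rewrite cmodE; apply: le_trans (@le_normcD R (F i) y2) _; by rewrite -!cmodE lerD2l.
Qed.

Lemma cmod_prod (I : finType) (F : I -> complex R) :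
  cmod (\prod_i F i) = \prod_i cmod (F i).
Proof.
have c1 : cmod (1 : complex R) = 1 by rewrite cmod_real normr1.
exact: (big_morph _ (@cmodM) c1).
Qed.


Section Mn.
Variables (r n : nat) (A : cubmx R r n).


Lemma sym_reindex (y : 'I_r -> 'I_n -> R) (s : 'S_r) : cub_symmetric A ->
  \sum_(i : r.-tuple 'I_n) A i * \prod_k y k (tnth i k) =
  \sum_(i : r.-tuple 'I_n) A i * \prod_k y k (tnth i (s k)).
Proof.
move=> As.
pose h (i : r.-tuple 'I_n) := [tuple tnth i (s k) | k < r].
have hi : injective h.
  move=> i1 i2 E; apply: eq_from_tnth => j.
  have := congr1 (fun t => tnth t ((s^-1)%g j)) E.
  by rewrite !tnth_mktuple permKV.
rewrite (reindex_inj hi); apply: eq_bigr => i _.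
by rewrite As; congr (_ * _); apply: eq_bigr => k _; rewrite tnth_mktuple.
Qed.

Lemma LR_bound (p : R) (y : 'I_r -> 'I_n -> R) : (0 < r)%N -> r%:R <= p ->
  cub_nonneg A -> cub_symmetric A -> (forall k j, 0 <= y k j) ->
  \sum_(i : r.-tuple 'I_n) A i * \prod_k y k (tnth i k) <=
  PA A (fun j => ((\sum_k y k j `^ p) / r%:R) `^ p^-1).
Proof.
move=> r0 rp A0 As y0.
have fpos : (0:R) < r`!%:R by rewrite ltr0n fact_gt0.
rewrite -(ler_pM2l fpos).
have -> : r`!%:R * (\sum_(i : r.-tuple 'I_n) A i * \prod_k y k (tnth i k)) =
    \sum_(s : 'S_r) \sum_(i : r.-tuple 'I_n) A i * \prod_k y k (tnth i (s k)).
  by rewrite -(eq_bigr _ (fun s _ => sym_reindex y s As)) sumr_const card_Sn mulr_natl.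
rewrite exchange_big /PA mulr_sumr; apply: ler_sum => i _.
rewrite -mulr_sumr mulrCA; apply: ler_wpM2l; first exact: A0.
apply: (@perm_bound R r (fun k j => y k (tnth i j))
  (fun j => ((\sum_k y k (tnth i j) `^ p) / r%:R) `^ p^-1)) => // [j|j].
  exact: powR_ge0.
exact: powmean.
Qed.

End Mn.

Lemma unpow (p S : R) : 0 < p -> 0 <= S -> S `^ p^-1 = 1 -> S = 1.
Proof.
move=> p0 S0 H; have := congr1 (fun z => z `^ p) H.
by rewrite /= -powRrM mulVf ?gt_eqF // powRr1 // powR1.
Qed.

Lemma m_unit (r n : nat) (p : R) (y : 'I_r -> 'I_n -> R) : (0 < r)%N -> 0 < p ->
  (forall k, \sum_j y k j `^ p = 1) ->
  lpnormR p (fun j => ((\sum_k y k j `^ p) / r%:R) `^ p^-1) = 1.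
Proof.
move=> r0 p0 H; rewrite /lpnormR.
have rR0 : (0 : R) < r%:R by rewrite ltr0n.
under eq_bigr => j _.
  rewrite ger0_norm ?powR_ge0 // -powRrM mulVf ?gt_eqF // powRr1; last first.
    by apply: divr_ge0; [apply: sumr_ge0 => k _; apply: powR_ge0 | apply: ltW].
  over.
rewrite -mulr_suml exchange_big /=.
under eq_bigr => k _ do rewrite H.
by rewrite sumr_const card_ord -mulr_natr mul1r divff ?gt_eqF // powR1.
Qed.

Lemma sup_dom (S1 S2 : set R) : S1 `<=` S2 ->
  (forall b, S2 b -> exists2 a, S1 a & b <= a) -> sup S1 = sup S2.
Proof.
move=> sub dom.
have [[[b S2b] [u ub2]]|nhs] := pselect (has_sup S2).
  have S1n : S1 !=set0 by have [a S1a _] := dom b S2b; exists a.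
  have ub1 : has_ubound S1 by exists u => x /sub /ub2.
  apply/le_anti/andP; split.
    apply: ge_sup => // x /sub; exact: (ub_le_sup (ex_intro _ u ub2)).
  apply: ge_sup; first by exists b.
  move=> x /dom [a /(ub_le_sup ub1) H1 H2]; exact: le_trans H2 H1.
rewrite (sup_out nhs) sup_out // => -[[a S1a] [u ub1]]; apply: nhs; split.
  by exists a; apply: sub.
by exists u => x /dom [a2 /ub1 H1 H2]; exact: le_trans H2 H1.
Qed.

End An.

Theorem theorem2 (R : realType) (r n : nat) (A : cubmx R r n) (p : R) :
  (2 <= r)%N -> cub_nonneg A -> cub_symmetric A -> r%:R <= p ->
  eta_p p A = spec_pnorm p A.
Proof.
move=> r2 A0 As rp.
have r0 : (0 < r)%N by apply: leq_trans r2.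
have p0 : 0 < p by apply: lt_le_trans rp; rewrite ltr0n.
rewrite /eta_p /spec_pnorm; apply: sup_dom.
  move=> _ [x Hx <-]; exists (fun _ j => Complex (x j) 0).
    move=> k; rewrite /lpnormC.
    under eq_bigr => j _ do rewrite cmod_real.
    exact: Hx.
  have rc : forall a : R, Complex a 0 = (a%:C)%C by [].
  have -> : LA A (fun _ j => Complex (x j) 0) = Complex (PA A x) 0.
    rewrite /LA /PA [RHS]rc rmorph_sum; apply: eq_bigr => i _.
    rewrite rmorphM rmorph_prod rc; congr (_ * _); apply: eq_bigr => k _.
    by rewrite /conjc /= oppr0.
  by rewrite cmod_real.
move=> _ [xs Hxs <-].
pose y k j := cmod (xs k j).
have y0 : forall k j, 0 <= y k j by move=> k j; apply: cmod_ge0.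
have Hy : forall k, \sum_j y k j `^ p = 1.
  move=> k; apply: (@unpow _ p); first exact p0; first by apply: sumr_ge0 => j _; apply: powR_ge0.
  exact: Hxs.
set m := fun j => ((\sum_k y k j `^ p) / r%:R) `^ p^-1.
exists `|PA A m|; first by exists m => //; exact: m_unit.
rewrite /LA; apply: le_trans; first exact: cmod_sum.
apply: (le_trans (y := \sum_(i : r.-tuple 'I_n) A i * \prod_k y k (tnth i k))).
  apply: ler_sum => i _; rewrite cmodM cmod_real ger0_norm // cmod_prod.
  by under eq_bigr => k _ do rewrite cmod_conj.
apply: le_trans (ler_norm _).
exact: LR_bound.
Qed.
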